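(* Let $Y$ be a regular space, let $X\subseteq Y$ be such that $\psi(X)<\mathfrak b$, and let $(S,\mathcal S)$ be an $\alpha$-scaffold in $X$. Then there exists $S'\le_{\mathcal S}S$ that is closed in $X$.
   Context: $\mathfrak b$ is the least cardinality of an unbounded family in $\omega^\omega$. For a space $Z$ and $z\in Z$, $\psi(Z,z)$ is the least cardinality of a family $\mathcal U$ of open neighbourhoods of $z$ with $\bigcap\mathcal U=\{z\}$, and $\psi(Z)=\sup_{z\in Z}\psi(Z,z)$. Scaffolds in a space $X$ are defined by recursion. A pair $(S,\mathcal S)$ with $S\subseteq X$, $\mathcal S\subseteq 2^S$ is: (S.0) a $0$-scaffold if $S=\{x\}$, $\mathcal S=\{S\}$; then $\mathrm{ht}(S)=\mathrm{ht}_S(x)=0$ and $\mathrm{cor}\,S=x$. (S.1) an $\alpha$-scaffold if there are $x\in S$, pairwise disjoint open sets $U_n\subseteq X$, and $\alpha_n$-scaffolds $(S_n,\mathcal S_n)$ $(n\in\omega)$ with $(\alpha_n)$ nondecreasing, $\alpha=\min\{\beta:\beta>\alpha_n\text{ for all }n\}$, $\mathrm{cor}\,S_n\to x$, $\overline{S_n}\subseteq U_n$, $x\notin\overline{U_n}$, $S=\{x\}\cup\bigcup_nS_n$, $\mathcal S=\{S\}\cup\bigcup_n\mathcal S_n$; then $\mathrm{ht}(S)=\mathrm{ht}_S(x)=\alpha$, $\mathrm{ht}_S(x')=\mathrm{ht}_{S_n}(x')$ for $x'\in S_n$, and $\mathrm{cor}\,S=x$. $\mathcal S$ is a stratification of $S$.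 For $S''\in\mathcal S$ let $\mathcal S|_{S''}=\{T\in\mathcal S:T\subseteq S''\}$; $\mathcal S^-$ is the set of $\subseteq$-maximal elements of $\mathcal S\setminus\{S\}$. Recursively, for $S'\subseteq S$, $S'\le_{\mathcal S}S$ means $\mathrm{cor}\,S'=\mathrm{cor}\,S$ and there is a stratification $\mathcal S'$ of $S'$ such that $\mathcal S'^-\neq\emptyset$ whenever $\mathcal S^-\neq\emptyset$, and each $\beta$-scaffold $B'\in\mathcal S'^-$ satisfies $B'\le_{\mathcal S|_B}B$ for some $\beta$-scaffold $B\in\mathcal S^-$. *)

(* Defs.v *)
From mathcomp Require Import all_boot all_order.
From mathcomp Require Import all_classical all_reals all_analysis.
Set Implicit Arguments. Unset Strict Implicit. Unset Printing Implicit Defensive.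
Local Open Scope classical_set_scope.

(* [OZ] denotes 0; [ON f] denotes min{ b : b > f n for all n }
   = sup_n (f n + 1).  Ordinal comparison is computed by [ole]/[olt]. *)
Inductive otree : Type := OZ : otree | ON : (nat -> otree) -> otree.

Fixpoint ole (t u : otree) {struct t} : Prop :=
  match t with
  | OZ => True
  | ON f => forall n, (fix lt (u : otree) : Prop :=
                         match u with
                         | OZ => False
                         | ON g => exists m, ole (f n) (g m)
                         end) u
  end.

Definition olt (t u : otree) : Prop :=
  match u with OZ => False | ON g => exists m, ole t (g m) end.

Definition oeq (t u : otree) : Prop := ole t u /\ ole u t.

Section Rel.
Context {Y : topologicalType}.

Definition open_in (X U : set Y) : Prop :=
  U `<=` X /\ exists V, open V /\ U = X `&` V.

Definition closure_in (X A : set Y) : set Y := X `&` closure A.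

Definition closed_in (X A : set Y) : Prop :=
  A `<=` X /\ A = closure_in X A.

(* [scaffold X S SS a c] : (S, SS) is an a-scaffold in X with cor S = c. *)
Inductive scaffold (X : set Y) : set Y -> set (set Y) -> otree -> Y -> Prop :=
| scaffold0 (x : Y) : X x -> scaffold X [set x] [set [set x]] OZ x
| scaffold1 (x : Y) (U : nat -> set Y) (Sn : nat -> set Y)
    (SSn : nat -> set (set Y)) (an : nat -> otree) (cn : nat -> Y) :
    X x ->
    (forall n, open_in X (U n)) ->
    (forall n m, n <> m -> U n `&` U m = set0) ->
    (forall n, scaffold X (Sn n) (SSn n) (an n) (cn n)) ->
    (forall n, ole (an n) (an n.+1)) ->
    cn @ \oo --> x ->
    (forall n, closure_in X (Sn n) `<=` U n) ->
    (forall n, ~ closure_in X (U n) x) ->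
    scaffold X ([set x] `|` \bigcup_n Sn n)
      ([set [set x] `|` \bigcup_n Sn n] `|` \bigcup_n SSn n) (ON an) x.

Definition restr (SS : set (set Y)) (B : set Y) : set (set Y) :=
  [set T | SS T /\ T `<=` B].

Definition maxel (SS : set (set Y)) (S : set Y) : set (set Y) :=
  [set B | SS B /\ B <> S /\
     forall C, SS C -> C <> S -> B `<=` C -> C = B].

Inductive sle (X : set Y) : set Y -> set Y -> set (set Y) -> Prop :=
| sle_intro (S' S : set Y) (SS : set (set Y)) :
    S' `<=` S ->
    (exists (SS' : set (set Y)) (a' : otree) (c : Y),
        scaffold X S' SS' a' c /\
        (exists a, scaffold X S SS a c) /\
        (maxel SS S !=set0 -> maxel SS' S' !=set0) /\
        (forall B', maxel SS' S' B' ->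
           forall (b : otree) (cB' : Y), scaffold X B' (restr SS' B') b cB' ->
           exists B, maxel SS S B /\
             (exists (b0 : otree) (cB : Y),
                 scaffold X B (restr SS B) b0 cB /\ oeq b b0) /\
             sle X B' B (restr SS B))) ->
    sle X S' S SS.

End Rel.

Definition dom_star (f g : nat -> nat) : Prop :=
  \forall n \near \oo, (f n <= g n)%N.

Definition unbounded (F : set (nat -> nat)) : Prop :=
  ~ exists g, forall f, F f -> dom_star f g.

Definition card_lt_b (T : Type) (K : set T) : Prop :=
  forall F : set (nat -> nat), unbounded F -> ~ (card_le F K).

Definition psi_at_le {Y : topologicalType} (T : Type) (X : set Y) (x : Y)
  (K : set T) : Prop :=
  exists UU : set (set Y),
    (forall U, UU U -> open_in X U /\ U x) /\
    X `&` \bigcap_(U in UU) U = [set x] /\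
    card_le UU K.

Definition psi_lt_b {Y : topologicalType} (X : set Y) : Prop :=
  exists (T : Type) (K : set T), card_lt_b K /\
    forall x, X x -> @psi_at_le Y T X x K.

(* Main.v *)
Require Import Defs.
From mathcomp Require Import all_boot all_order.
From mathcomp Require Import all_classical all_reals all_analysis.
From mathcomp Require Import zify.
Local Open Scope classical_set_scope.
Set Implicit Arguments. Unset Strict Implicit. Unset Printing Implicit Defensive.


Lemma ole_ON f g : ole (ON f) (ON g) <-> forall n, exists m, ole (f n) (g m).
Proof. by []. Qed.

Lemma ole_refl t : ole t t.
Proof. elim: t => [//|f IH] /=; move=> n; by exists n. Qed.

Lemma ole_trans t u v : ole t u -> ole u v -> ole t v.
Proof.
elim: t u v => [//|f IH] u v.
case: u => [|g]; first by move=> H; have [] := H 0.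
case: v => [|h]; first by move=> _ H; have [] := H 0.
move=> H1 H2 n. have [m Hm] := H1 n. have [k Hk] := H2 m.
exists k. exact: IH Hm Hk.
Qed.

Lemma oeq_sym a b : oeq a b -> oeq b a.
Proof. by case. Qed.
Lemma oeq_trans a b c : oeq a b -> oeq b c -> oeq a c.
Proof. move=> [h1 h2] [h3 h4]; split; [exact: ole_trans h1 h3|exact: ole_trans h4 h2]. Qed.
Lemma oeq_refl a : oeq a a.
Proof. split; exact: ole_refl. Qed.

Lemma ole_chain (an : nat -> otree) : (forall n, ole (an n) (an n.+1)) ->
  forall n m, ole (an n) (an (n + m)).
Proof.
move=> H n; elim=> [|m IH]; first by rewrite addn0; exact: ole_refl.
by rewrite addnS; apply: ole_trans IH (H _).
Qed.

Section Scaf.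
Context {Y : topologicalType} (X : set Y).

Lemma scaf_basic S SS a c : scaffold X S SS a c ->
  [/\ S `<=` X, S c, SS S, (forall T, SS T -> T `<=` S) & (forall T, SS T -> T !=set0)].
Proof.
elim=> {S SS a c}.
- move=> x Xx; split => //.
  + by move=> y ->.
  + by move=> T ->.
  + by move=> T -> ; exists x.
move=> x U Sn SSn an cn Xx Uo Ud Ss IH _ _ _ _; split.
- move=> y [->//|[n _ Hy]]. by have [+ _ _ _ _] := IH n; apply.
- by left.
- by left.
- move=> T [->//|[n _ HT]] y Ty. right; exists n => //.
  by have [_ _ _ h _] := IH n; apply: (h T HT).
- move=> T [->|[n _ HT]]; first by exists x; left.
  by have [_ _ _ _ h] := IH n; apply: h.
Qed.

Section S1.
Variables (x : Y) (U : nat -> set Y) (Sn : nat -> set Y)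
    (SSn : nat -> set (set Y)) (an : nat -> otree) (cn : nat -> Y).
Hypotheses (Uo : forall n, open_in X (U n))
  (Ud : forall n m, n <> m -> U n `&` U m = set0)
  (Ss : forall n, scaffold X (Sn n) (SSn n) (an n) (cn n))
  (Scl : forall n, closure_in X (Sn n) `<=` U n)
  (xU : forall n, ~ closure_in X (U n) x).

Lemma s1_SU n : Sn n `<=` U n.
Proof.
move=> y Sy; apply: Scl; split; last exact: subset_closure.
by have [+ _ _ _ _] := scaf_basic (Ss n); apply.
Qed.

Lemma s1_notx n : ~ Sn n x.
Proof.
move=> /s1_SU Ux; apply: (xU (n:=n)); split; last exact: subset_closure.
by case: (Uo n) => + _; apply.
Qed.

Lemma s1_disj n m y : Sn n y -> Sn m y -> n = m.
Proof.
move=> /s1_SU h1 /s1_SU h2; have [//|/eqP nm] := eqVneq n m.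
exfalso; have := Ud nm; rewrite -subset0 => /(_ y (conj h1 h2)) //.
Qed.

Local Notation S := ([set x] `|` \bigcup_n Sn n).
Local Notation SS := ([set S] `|` \bigcup_n SSn n).

Lemma s1_Sne n : Sn n !=set0.
Proof. have [_ h _ _ _] := scaf_basic (Ss n); by exists (cn n). Qed.

Lemma s1_inSS T : SS T -> T <> S -> exists n, SSn n T.
Proof. by move=> [->//|[n _ h]] _; exists n. Qed.

Lemma s1_maxel B : maxel SS S B <-> exists n, B = Sn n.
Proof.
split.
- move=> [SB [BS Bmax]].
  have [n hn] := s1_inSS SB BS.
  exists n; apply: esym; apply: Bmax.
  + right; exists n => //. by have [_ _ + _ _] := scaf_basic (Ss n).
  + move=> E; apply: (@s1_notx n); rewrite E; by left.
  + by have [_ _ _ h _] := scaf_basic (Ss n); apply: h.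
- move=> [n ->]; split; [|split].
  + right; exists n => //. by have [_ _ + _ _] := scaf_basic (Ss n).
  + move=> E; apply: (@s1_notx n); rewrite E; by left.
  + move=> C SC CS sub. have [k hk] := s1_inSS SC CS.
    have Ck : C `<=` Sn k by have [_ _ _ h _] := scaf_basic (Ss k); apply: h.
    have [y Sy] := s1_Sne n.
    have nk : n = k by apply: (s1_disj Sy); apply: Ck; apply: sub.
    subst k. apply/seteqP; split => //.
Qed.

Lemma s1_restr n : restr SS (Sn n) = SSn n.
Proof.
apply/seteqP; split.
- move=> T [ST TS]. case: ST => [E|[k _ hk]].
  + exfalso; apply: (@s1_notx n); apply: TS; rewrite E; by left.
  + have [_ _ _ hs hne] := scaf_basic (Ss k).
    have [y Ty] := hne T hk.
    have -> : n = k by apply: (s1_disj (TS y Ty)); apply: hs hk y Ty.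
    exact: hk.
- move=> T hT; split; first by right; exists n.
  by have [_ _ _ hs _] := scaf_basic (Ss n); apply: hs.
Qed.

End S1.

Lemma scaf_uniq S1 SS1 a c : scaffold X S1 SS1 a c ->
  forall S2 SS2 b d, scaffold X S2 SS2 b d -> S1 = S2 -> SS1 = SS2 ->
  oeq a b /\ c = d.
Proof.
elim=> {S1 SS1 a c}.
- move=> x Xx S2 SS2 b d H2; case: H2.
  + move=> x' _ E _; split; first exact: oeq_refl.
    by have : [set x] x' by rewrite E.
  + move=> x' U Sn SSn an cn _ Uo Ud Ss _ _ Scl xU E1 E2; exfalso.
    have h0 : [set [set x]] (Sn 0).
      rewrite E2; right; exists 0 => //. by have [_ _ h _ _] := scaf_basic (Ss 0).
    have hx : [set x] x' by rewrite E1; left.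
    apply: (s1_notx Uo Ss Scl xU (n:=0)).
    by rewrite h0 -hx.
- move=> x U Sn SSn an cn Xx Uo Ud Ss IH _ _ Scl xU S2 SS2 b d H2; case: H2.
  + move=> x' _ E1 E2; exfalso.
    have h0 : [set [set x']] (Sn 0).
      rewrite -E2; right; exists 0 => //. by have [_ _ h _ _] := scaf_basic (Ss 0).
    have hx : [set x'] x by rewrite -E1; left.
    apply: (s1_notx Uo Ss Scl xU (n:=0)).
    by rewrite h0 hx.
  + move=> x' U' Sn' SSn' an' cn' _ Uo' Ud' Ss' _ _ Scl' xU' E1 E2.
    have M B : (exists n, B = Sn n) <-> (exists m, B = Sn' m).
      rewrite -(s1_maxel Uo Ud Ss Scl xU) -(s1_maxel Uo' Ud' Ss' Scl' xU').
      by rewrite E2 E1.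
    have R n m : Sn n = Sn' m -> SSn n = SSn' m.
      move=> E. rewrite -(s1_restr Uo Ud Ss Scl xU) -(s1_restr Uo' Ud' Ss' Scl' xU').
      by rewrite E2 E.
    split; first split.
    * move=> n /=. have [m Em] := (M (Sn n)).1 (ex_intro _ n erefl).
      exists m. exact: (IH n _ _ _ _ (Ss' m) Em (R _ _ Em)).1.1.
    * move=> m /=. have [n En] := (M (Sn' m)).2 (ex_intro _ m erefl).
      exists n. exact: (IH n _ _ _ _ (Ss' m) (esym En) (R _ _ (esym En))).1.2.
    * have : ([set x] `|` \bigcup_n Sn n) x' by rewrite E1; left.
      case=> [//|[n _ hn]].
      have [m Em] := (M (Sn n)).1 (ex_intro _ n erefl).
      exfalso; apply: (s1_notx Uo' Ss' Scl' xU' (n:=m)). by rewrite -Em.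
Qed.
End Scaf.


Section Top.
Context {Y : topologicalType}.

Lemma ev_nat (P : nat -> Prop) : (\forall n \near \oo, P n) -> exists N, forall n, (N <= n)%N -> P n.
Proof. move=> [N _ HN]. exists N. move=> n hn. exact: HN. Qed.

Lemma cvg_ev (cn : nat -> Y) x W : cn @ \oo --> x -> open W -> W x ->
  exists N, forall n, (N <= n)%N -> W (cn n).
Proof.
move=> H Wo Wx. apply: ev_nat. apply: H. exact: open_nbhs_nbhs.
Qed.

Lemma reg_open (a : Y) O : regular_space Y -> open O -> O a ->
  exists W, [/\ open W, W a & closure W `<=` O].
Proof.
move=> R Oo Oa.
have : nbhs a O by exact: open_nbhs_nbhs.
move=> /R [A Aa AO]. exists A°; split.
- exact: open_interior.
- exact: Aa.
- apply: subset_trans AO. apply: closureS. exact: interior_subset.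
Qed.

Lemma not_closure (A : set Y) y : ~ closure A y -> exists B, nbhs y B /\ A `&` B = set0.
Proof.
move=> H; apply: contrapT => H2; apply: H => B nB.
apply/set0P; apply/negP => /eqP E; apply: H2; by exists B.
Qed.

Lemma sle_sub (X : set Y) S' S SS : sle X S' S SS -> S' `<=` S.
Proof. by case. Qed.

Lemma psi_sep (X : set Y) : psi_lt_b X -> forall y z, X y -> X z -> y <> z ->
  exists O, [/\ open O, O y & ~ O z].
Proof.
move=> [T [K [_ HK]]] y z Xy Xz yz.
have [UU [HU [HI _]]] := HK y Xy.
have : ~ (X `&` \bigcap_(U in UU) U) z by rewrite HI => /= E; apply: yz; rewrite E.
move=> nz.
have [U UUU nUz] : exists2 U, UU U & ~ U z.
  apply: contrapT => H; apply: nz; split => // U UUU.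
  apply: contrapT => nUz; apply: H; by exists U.
have [[_ [V [Vo E]]] Uy] := HU U UUU.
exists V; split => //.
- by move: Uy; rewrite E => -[].
- by move=> Vz; apply: nUz; rewrite E.
Qed.

Lemma closed_single (X : set Y) c : psi_lt_b X -> X c -> closed_in X [set c].
Proof.
move=> Hp Xc; split; first by move=> y ->.
apply/seteqP; split.
- move=> y ->; split => //; exact: subset_closure.
- move=> y [Xy cly]; apply: contrapT => yc.
  have [Q [Oo Oy nOc]] := psi_sep Hp Xy Xc yc.
  have [z [zc Oz]] := cly Q (open_nbhs_nbhs (conj Oo Oy)).
  by move: zc Oz => -> .
Qed.

End Top.


Definition bmax (fn : nat -> nat -> nat) j := \max_(n < j.+1) \max_(k < j.+1) fn n k.

Lemma bmax_ge fn n k j : (n <= j)%N -> (k <= j)%N -> (fn n k <= bmax fn j)%N.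
Proof.
move=> hn hk; rewrite /bmax.
have hn' : (n < j.+1)%N by [].
have hk' : (k < j.+1)%N by [].
apply: leq_trans (@leq_bigmax _ (fun n : 'I_j.+1 => \max_(k < j.+1) fn n k) (Ordinal hn')).
exact: (@leq_bigmax _ (fun k : 'I_j.+1 => fn n k) (Ordinal hk')).
Qed.

Lemma near_all_lt {Y : topologicalType} (y : Y) (Q : nat -> set Y) L :
  (forall k, (k < L)%N -> nbhs y (Q k)) -> nbhs y (fun z => forall k, (k < L)%N -> Q k z).
Proof.
elim: L => [|L IH] H.
  by apply: (@filterS _ _ (nbhs_filter y) setT _ _ (@filterT _ _ (nbhs_filter y))) => z _ k.
have hI := @filterI _ _ (nbhs_filter y) _ _ (IH (fun k hk => H k (ltnW hk))) (H L (ltnSn L)).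
apply: (@filterS _ _ (nbhs_filter y) _ _ _ hI) => z [h1 h2] k; rewrite ltnS leq_eqVlt => /orP [/eqP ->//|hk].
exact: h1.
Qed.

Section Main.
Context {Y : topologicalType} (X : set Y).

Lemma s1_sle x U Sn SSn an cn U' Sn' SSn' an' cn' (σ : nat -> nat) :
  X x ->
  (forall n, open_in X (U n)) ->
  (forall n m, n <> m -> U n `&` U m = set0) ->
  (forall n, scaffold X (Sn n) (SSn n) (an n) (cn n)) ->
  (forall n, ole (an n) (an n.+1)) ->
  cn @ \oo --> x ->
  (forall n, closure_in X (Sn n) `<=` U n) ->
  (forall n, ~ closure_in X (U n) x) ->
  (forall n, open_in X (U' n)) ->
  (forall n m, n <> m -> U' n `&` U' m = set0) ->
  (forall n, scaffold X (Sn' n) (SSn' n) (an' n) (cn' n)) ->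
  (forall n, ole (an' n) (an' n.+1)) ->
  cn' @ \oo --> x ->
  (forall n, closure_in X (Sn' n) `<=` U' n) ->
  (forall n, ~ closure_in X (U' n) x) ->
  (forall k, sle X (Sn' k) (Sn (σ k)) (SSn (σ k)) /\ oeq (an' k) (an (σ k))) ->
  sle X ([set x] `|` \bigcup_n Sn' n) ([set x] `|` \bigcup_n Sn n)
    ([set [set x] `|` \bigcup_n Sn n] `|` \bigcup_n SSn n).
Proof.
move=> Xx Uo Ud Ss mono cvg Scl xU Uo' Ud' Ss' mono' cvg' Scl' xU' Hs.
apply: sle_intro.
- move=> y [->|[k _ hk]]; first by left.
  right; exists (σ k) => //; exact: sle_sub (Hs k).1 _ hk.
exists ([set [set x] `|` \bigcup_n Sn' n] `|` \bigcup_n SSn' n), (ON an'), x.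
split; first exact: (scaffold1 Xx Uo' Ud' Ss' mono' cvg' Scl' xU').
split; first by exists (ON an); exact: (scaffold1 Xx Uo Ud Ss mono cvg Scl xU).
split.
- move=> _; exists (Sn' 0); apply/(s1_maxel Uo' Ud' Ss' Scl' xU'); by exists 0.
- move=> B' /(s1_maxel Uo' Ud' Ss' Scl' xU') [k ->] b cB'.
  rewrite (s1_restr Uo' Ud' Ss' Scl' xU') => Hb.
  have [Hoe _] := scaf_uniq (Ss' k) Hb erefl erefl.
  exists (Sn (σ k)); split; first by apply/(s1_maxel Uo Ud Ss Scl xU); exists (σ k).
  rewrite (s1_restr Uo Ud Ss Scl xU); split; last exact: (Hs k).1.
  exists (an (σ k)), (cn (σ k)); split; first exact: Ss.
  exact: oeq_trans (oeq_sym Hoe) (Hs k).2.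
Qed.

Record good S SS a c (P : (nat -> nat) -> set Y) (PS : (nat -> nat) -> set (set Y))
    (Pa : (nat -> nat) -> otree) : Prop := Good {
 g_scaf : forall h, scaffold X (P h) (PS h) (Pa h) c;
 g_oeq : forall h, oeq (Pa h) a;
 g_sle : forall h, sle X (P h) S SS;
 g_cl : forall h, closed_in X (P h);
 g_mono : forall h h', (forall j, (h j <= h' j)%N) -> P h' `<=` P h;
 g_small : forall W, open W -> W c -> exists f : nat -> nat,
    forall h, (forall j, (f j <= h j)%N) -> P h `<=` W }.

End Main.


Section Claim.
Context {Y : topologicalType} (X : set Y).
Hypothesis Hreg : regular_space Y.
Hypothesis Hpsi : psi_lt_b X.

Lemma good0 x : X x -> exists P PS Pa, good X [set x] [set [set x]] OZ x P PS Pa.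
Proof.
move=> Xx.
exists (fun _ => [set x]), (fun _ => [set [set x]]), (fun _ => OZ); split.
- move=> h; exact: scaffold0.
- move=> h; exact: oeq_refl.
- move=> h; apply: sle_intro => //.
  exists [set [set x]], OZ, x; split; first exact: scaffold0.
  split; first by exists OZ; exact: scaffold0.
  split.
  + by move=> [B [hB [BS _]]]; exfalso; apply: BS.
  + by move=> B' [hB [BS _]]; exfalso; apply: BS.
- move=> h; exact: closed_single.
- by move=> h h' _.
- by move=> W _ Wx; exists (fun _ => 0) => h _ y ->.
Qed.


Definition code n k := (n + k).+1.

Lemma good1 x U Sn SSn an cn :
  X x ->
  (forall n, open_in X (U n)) ->
  (forall n m, n <> m -> U n `&` U m = set0) ->
  (forall n, scaffold X (Sn n) (SSn n) (an n) (cn n)) ->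
  (forall n, ole (an n) (an n.+1)) ->
  cn @ \oo --> x ->
  (forall n, closure_in X (Sn n) `<=` U n) ->
  (forall n, ~ closure_in X (U n) x) ->
  (forall n, exists P PS Pa, good X (Sn n) (SSn n) (an n) (cn n) P PS Pa) ->
  exists P PS Pa, good X ([set x] `|` \bigcup_n Sn n)
      ([set [set x] `|` \bigcup_n Sn n] `|` \bigcup_n SSn n) (ON an) x P PS Pa.
Proof.
move=> Xx Uo Ud Ss mono cvg Scl xU IH.
have IH' : forall n, exists t : ((nat -> nat) -> set Y) * ((nat -> nat) -> set (set Y))
    * ((nat -> nat) -> otree), good X (Sn n) (SSn n) (an n) (cn n) t.1.1 t.1.2 t.2.
  by move=> n; have [P [PS [Pa G]]] := IH n; exists (P, PS, Pa).
have [F HF] := choice IH'.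
pose Pn n := (F n).1.1. pose PSn n := (F n).1.2. pose Pan n := (F n).2.
have HFn : forall n, good X (Sn n) (SSn n) (an n) (cn n) (Pn n) (PSn n) (Pan n) by [].
clear IH IH' HF.
have [T [K [HKb HK]]] := Hpsi.
have [UU [HU [HI HUK]]] := HK x Xx.
have fV : forall V : set Y, exists f : nat -> nat, UU V -> exists W, [/\ open W, W x,
    (forall y, X y -> ~ V y -> ~ closure W y) &
    forall n h, W (cn n) -> (forall k, (f (code n k) <= h k)%N) -> Pn n h `<=` W].
  move=> V; case: (pselect (UU V)) => [UV|nUV]; last by exists id.
  have [[_ [Q [Oo E]]] Vx] := HU V UV.
  have Ox : Q x by move: Vx; rewrite E => -[].
  have [W [Wo Wx WO]] := reg_open Hreg Oo Ox.
  have hn : forall n, exists f : nat -> nat, W (cn n) ->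
      forall h, (forall k, (f k <= h k)%N) -> Pn n h `<=` W.
    move=> n; case: (pselect (W (cn n))) => [Wc|nW]; last by exists id.
    have [f Hf] := g_small (HFn n) Wo Wc. by exists f => _.
  have [fn Hfn] := choice hn.
  exists (bmax fn) => _; exists W; split => //.
  - move=> y Xy nVy cy; apply: nVy; rewrite E; split => //; exact: WO.
  - move=> n h Wc hh; apply: (Hfn n Wc) => k; apply: leq_trans (hh k).
    apply: bmax_ge; rewrite /code; lia.
have [fv Hfv] := choice fV.
have [g Hg] : exists g, forall f, (fv @` UU) f -> dom_star f g.
  apply: contrapT => H; apply: (HKb (fv @` UU)) => //.
  exact: card_le_trans (card_image_le _ _) HUK.
pose arg (h : nat -> nat) n := fun i => maxn (h (code n i)) (g (code n i)).
pose A h k := Pn (k + h 0) (arg h (k + h 0)).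
have Uo' h : forall k, open_in X (U (k + h 0)) by [].
have Ud' h : forall k k', k <> k' -> U (k + h 0) `&` U (k' + h 0) = set0.
  move=> k k' kk; apply: Ud; lia.
have Ss' h k : scaffold X (A h k) (PSn (k + h 0) (arg h (k + h 0)))
   (Pan (k + h 0) (arg h (k + h 0))) (cn (k + h 0)) := g_scaf (HFn _) _.
have mono' h k : ole (Pan (k + h 0) (arg h (k + h 0))) (Pan (k.+1 + h 0) (arg h (k.+1 + h 0))).
  apply: ole_trans (g_oeq (HFn _) _).1 _.
  apply: ole_trans (g_oeq (HFn _) _).2.
  rewrite addSn; exact: mono.
have cvg' h : (fun k => cn (k + h 0)) @ \oo --> x.
  move=> B /cvg [N _ HN]; exists N => // k /= hk; apply: HN => /=; lia.
have AS h k : A h k `<=` Sn (k + h 0) := sle_sub (g_sle (HFn _) _).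
have AX h k : A h k `<=` X by have [] := g_cl (HFn (k + h 0)) (arg h (k + h 0)).
have Scl' h k : closure_in X (A h k) `<=` U (k + h 0).
  have [_ E] := g_cl (HFn (k + h 0)) (arg h (k + h 0)).
  rewrite -E => y Ay; exact: (s1_SU Ss Scl (AS h k y Ay)).
have xU' h k : ~ closure_in X (U (k + h 0)) x := xU _.
have Hscaf h := scaffold1 Xx (Uo' h) (Ud' h) (Ss' h) (mono' h) (cvg' h) (Scl' h) (xU' h).
exists (fun h => [set x] `|` \bigcup_k A h k).
exists (fun h => [set [set x] `|` \bigcup_k A h k] `|` \bigcup_k PSn (k + h 0) (arg h (k + h 0))).
exists (fun h => ON (fun k => Pan (k + h 0) (arg h (k + h 0)))).
split.
- exact: Hscaf.
- move=> h; split => n /=.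
  + exists (n + h 0); exact: (g_oeq (HFn _) _).1.
  + exists n; apply: ole_trans (ole_chain mono n (h 0)) _; exact: (g_oeq (HFn _) _).2.
- move=> h; apply: (s1_sle (σ := fun k => k + h 0) Xx Uo Ud Ss mono cvg Scl xU
     (Uo' h) (Ud' h) (Ss' h) (mono' h) (cvg' h) (Scl' h) (xU' h)).
  move=> k; split; [exact: g_sle (HFn _) _|exact: g_oeq (HFn _) _].
- move=> h; split.
    by move=> y [->//|[k _ hk]]; exact: AX h k y hk.
  apply/seteqP; split.
    move=> y Py; split; last exact: subset_closure.
    by case: Py => [->//|[k _ hk]]; exact: AX h k y hk.
  move=> y [Xy cly]; apply: contrapT => nPy.
  have yx : y <> x by move=> E; apply: nPy; left.
  have [V UV nVy] : exists2 V, UU V & ~ V y.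
    apply: contrapT => H.
    have : (X `&` \bigcap_(U in UU) U) y.
      split => // V UV; apply: contrapT => nV; apply: H; by exists V.
    by rewrite HI => /= E; exact: yx E.
  have [W [Wo Wx sepy Hsm]] := Hfv V UV.
  have [N HN] : exists N, forall n, (N <= n)%N -> (fv V n <= g n)%N.
    apply: ev_nat; apply: Hg; by exists V.
  have [M HM] := cvg_ev cvg Wo Wx.
  pose L := maxn N M.
  have Asm : forall k, (L <= k)%N -> A h k `<=` W.
    move=> k hk; apply: Hsm; first by apply: HM; rewrite /L in hk; lia.
    move=> i; apply: leq_trans (HN _ _) _; first by rewrite /code /L in hk *; lia.
    rewrite /arg; lia.
  have [Q [Qo Qy nQx]] := psi_sep Hpsi Xy Xx yx.
  have [B1 [nB1 WB1]] := not_closure (sepy y Xy nVy).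
  have nbA : forall k, (k < L)%N -> nbhs y (fun z => ~ A h k z).
    move=> k _.
    have : ~ closure (A h k) y.
      move=> cl; apply: nPy; right; exists k => //.
      have [_ E] := g_cl (HFn (k + h 0)) (arg h (k + h 0)).
      have : closure_in X (A h k) y by split.
      by rewrite -E.
    move=> /not_closure [B [nB AB]].
    apply: (@filterS _ _ (nbhs_filter y) _ _ _ nB) => z Bz Az.
    have : (A h k `&` B) z by split.
    by rewrite AB.
  have nAll := near_all_lt nbA.
  have nQ : nbhs y Q := open_nbhs_nbhs (conj Qo Qy).
  have nB := @filterI _ _ (nbhs_filter y) _ _ nQ (@filterI _ _ (nbhs_filter y) _ _ nB1 nAll).
  have [z [Pz [Qz [B1z Az]]]] := cly _ nB.
  case: Pz => [zx|[k _ hk]]; first by apply: nQx; rewrite -zx.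
  case: (ltnP k L) => kL; first exact: (Az k kL hk).
  have : (W `&` B1) z by split => //; exact: Asm kL _ hk.
  by rewrite WB1.
- move=> h h' hh y [->|[k _ hk]]; first by left.
  right; exists (k + h' 0 - h 0) => //.
  have e : k + h' 0 - h 0 + h 0 = k + h' 0 by have := hh 0; lia.
  rewrite /A e; apply: (g_mono (HFn (k + h' 0)) _ hk) => i.
  rewrite /arg; have := hh (code (k + h' 0) i); lia.
- move=> W Wo Wx.
  have [M HM] := cvg_ev cvg Wo Wx.
  have hn : forall n, exists f : nat -> nat, W (cn n) ->
      forall h, (forall k, (f k <= h k)%N) -> Pn n h `<=` W.
    move=> n; case: (pselect (W (cn n))) => [Wc|nW]; last by exists id.
    have [f Hf] := g_small (HFn n) Wo Wc. by exists f => _.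
  have [fn Hfn] := choice hn.
  exists (fun j => maxn M (bmax fn j)) => h hh y [->//|[k _ hk]].
  have h0M : (M <= h 0)%N by have := hh 0; lia.
  apply: (Hfn (k + h 0) (HM _ _)) _ _ hk; first lia.
  move=> i; rewrite /arg.
  have b := @bmax_ge fn (k + h 0) i (code (k + h 0) i) ltac:(rewrite /code; lia) ltac:(rewrite /code; lia).
  have := hh (code (k + h 0) i); lia.
Qed.

Lemma claim S SS a c : scaffold X S SS a c -> exists P PS Pa, good X S SS a c P PS Pa.
Proof.
elim=> [x Xx|x U Sn SSn an cn Xx Uo Ud Ss IH mono cvg Scl xU]; first exact: good0.
exact: good1.
Qed.
End Claim.

Theorem corollary2 (Y : topologicalType) (X : set Y) (S : set Y)
  (SS : set (set Y)) (alpha : otree) (c : Y) :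
  @regular_space Y -> psi_lt_b X -> scaffold X S SS alpha c ->
  exists S' : set Y, sle X S' S SS /\ closed_in X S'.
Proof.
move=> Hreg Hpsi Hs.
have [P [PS [Pa G]]] := claim Hreg Hpsi Hs.
exists (P (fun _ => 0)); split; [exact: g_sle G _ | exact: g_cl G _].
Qed.
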